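(* Let $K\subseteq\mathbb{R}^d$ be a convex body containing the origin, let $\Lambda\subseteq\mathbb{R}^d$ be a lattice, let $V\subseteq\mathbb{R}^d$ be a rational linear subspace with $\dim V=\ell$, and let $i\in\{1,\dots,d\}$. Let $\pi_V$ denote the orthogonal projection of $\mathbb{R}^d$ onto $V$ and $V^\perp$ the orthogonal complement of $V$. Then $$\mu_i(K,\Lambda)\leqslant \max_{\substack{0\le j\le \ell\\ 0\le i-j\le d-\ell}} \Big(\mu_j(\pi_V(K),\pi_V(\Lambda))+\mu_{i-j}(K\cap V^\perp,\Lambda\cap V^\perp)\Big).$$
   Context: A convex body is a full-dimensional compact convex set; a lattice is a full-rank discrete subgroup. A linear subspace $V$ is rational (with respect to $\Lambda$) if it is spanned by vectors of $\Lambda$; then $\pi_V(\Lambda)$ is a lattice in $V$ and $\Lambda\cap V^\perp$ is a lattice in $V^\perp$. For a $k$-dimensional real vector space $W$, a lattice $\Gamma\subseteq W$, a compact convex set $C\subseteq W$ and $i\in\{1,\dots,k\}$, the $i$-th covering minimum is $\mu_i(C,\Gamma)=\min\{\mu\ge 0: (\mu C+\Gamma)\cap U\neq\emptyset \text{ for every affine subspace } U\subseteq W \text{ of dimension } k-i\}$; by convention $\mu_0(C,\Gamma)=0$. The covering minima of $\pi_V(K)$ and $\pi_V(\Lambda)$ are taken inside $V$, and those of $K\cap V^\perp$ and $\Lambda\cap V^\perp$ inside $V^\perp$. *)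

(* Defs.v *)
(* R^d is 'rV[R]_d with the standard
   inner product <x,y> = x *m y^T; linear subspaces are row spaces of
   square matrices (mxalgebra). *)
From HB Require Import structures.
From mathcomp Require Import all_boot all_order all_algebra.
From mathcomp Require Import all_classical all_reals all_analysis.
Set Implicit Arguments. Unset Strict Implicit. Unset Printing Implicit Defensive.
Import Order.TTheory GRing.Theory Num.Theory.
Import numFieldNormedType.Exports.
Local Open Scope classical_set_scope.
Local Open Scope ring_scope.

Section Defs.
Variables (R : realType) (d : nat).
Notation vec := 'rV[R]_d.

Definition convex_set (C : set vec) : Prop :=
  forall x y t, C x -> C y -> 0 <= t <= 1 -> C (t *: x + (1 - t) *: y).

Definition convex_body (K : set vec) : Prop :=
  convex_set K /\ compact K /\ interior K !=set0.

Definition is_lattice (L : set vec) : Prop :=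
  [/\ L 0, (forall x y, L x -> L y -> L (x - y)),
      (exists2 e : R, 0 < e & forall x, L x -> x != 0 -> e <= `|x|) &
      (exists B : 'M[R]_d, (forall k, L (row k B)) /\ \rank B = d)].

Definition rational_subspace (L : set vec) (V : 'M[R]_d) : Prop :=
  exists B : 'M[R]_d, (forall k, L (row k B)) /\ (B == V)%MS.

Definition orth_compl (V : 'M[R]_d) : 'M[R]_d := kermx V^T.

(* image of a set under the orthogonal projection onto V:
   p = pi_V(x) iff p \in V and x - p ⊥ V *)
Definition proj_set (V : 'M[R]_d) (A : set vec) : set vec :=
  [set p | exists2 x, A x & (p <= V)%MS /\ (x - p) *m V^T = 0].

Definition subspace_set (W : 'M[R]_d) : set vec := [set x | (x <= W)%MS].

(* i-th covering minimum of C w.r.t. G inside the linear subspace W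
   (of dimension k = \rank W); affine subspaces of W of dimension k - i are
   a + rowspace M with a \in W, M <= W, \rank M = k - i.
   Taken in the extended reals (+oo if no mu works); mu_0 = 0. *)
Definition covmin (W : 'M[R]_d) (C G : set vec) (i : nat) : \bar R :=
  if i == 0%N then 0%E else
  ereal_inf [set mu%:E | mu in [set mu : R | 0 <= mu /\
    forall (a : vec) (M : 'M[R]_d), (a <= W)%MS -> (M <= W)%MS ->
      \rank M = (\rank W - i)%N ->
      exists c g y, [/\ C c, G g, (y <= M)%MS & mu *: c + g = a + y]]].

End Defs.

(* Main.v *)
Require Import Defs.
From HB Require Import structures.
From mathcomp Require Import all_boot all_order all_algebra.
From mathcomp Require Import all_classical all_reals all_analysis.
From mathcomp Require Import ring lra zify.
From Stdlib Require Import Lia.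
Import Order.TTheory GRing.Theory Num.Theory.
Local Open Scope classical_set_scope.
Local Open Scope ring_scope.

Section LA.
Variables (R : realType) (d : nat) (V : 'M[R]_d).
Notation W := (kermx V^T).

Lemma orth0 (x : 'rV[R]_d) : (x <= V)%MS -> x *m V^T = 0 -> x = 0.
Proof.
case/submxP=> u Hx H.
have H2 : x *m x^T = 0 by rewrite {2}Hx trmx_mul mulmxA H mul0mx.
have H3 : \sum_k (x 0 k) ^+ 2 = 0.
  move/matrixP: H2 => /(_ 0 0); rewrite !mxE => E.
  rewrite -[RHS]E; apply: eq_bigr => k _; by rewrite !mxE expr2.
apply/rowP => k; rewrite mxE.
have := @psumr_eq0P _ _ predT (fun k => x 0 k ^+ 2) (fun k _ => sqr_ge0 (x 0 k)) H3 k isT.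
by move/eqP; rewrite sqrf_eq0 => /eqP.
Qed.

Lemma capVW0 : \rank (V :&: W)%MS = 0%N.
Proof.
apply/eqP; rewrite mxrank_eq0 -submx0; apply/row_subP => k.
have h1 : (row k (V :&: W) <= V)%MS := submx_trans (row_sub _ _) (capmxSl _ _).
have h2 : (row k (V :&: W) <= W)%MS := submx_trans (row_sub _ _) (capmxSr _ _).
by rewrite (orth0 _ h1 (sub_kermxP h2)) sub0mx.
Qed.

Lemma rankW : \rank W = (d - \rank V)%N.
Proof. by rewrite mxrank_ker mxrank_tr. Qed.

Lemma rankVW : \rank (V + W)%MS = d.
Proof.
have := mxrank_sum_cap V W; rewrite capVW0 rankW addn0 => ->.
by rewrite subnKC // rank_leq_col.
Qed.

Lemma decomp (x : 'rV[R]_d) : exists p q, [/\ (p <= V)%MS, (q <= W)%MS & x = p + q].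
Proof.
have : (x <= V + W)%MS by apply: submx_full; rewrite /row_full rankVW.
case/sub_addsmxP => u ->; exists (u.1 *m V), (u.2 *m W); split => //; exact: submxMl.
Qed.

Lemma inW (x : 'rV[R]_d) : (x <= W)%MS <-> x *m V^T = 0.
Proof. by split => [/sub_kermxP|/sub_kermxP]. Qed.

End LA.

Local Open Scope ereal_scope.

Definition Good {R : realType} {d : nat} (W : 'M[R]_d) (C G : set 'rV[R]_d)
  (i : nat) (mu : R) : Prop := (0 <= mu)%R /\
    forall (a : 'rV[R]_d) (M : 'M[R]_d), (a <= W)%MS -> (M <= W)%MS ->
      \rank M = (\rank W - i)%N ->
      exists c g y, [/\ C c, G g, (y <= M)%MS & (mu *: c + g = a + y)%R].

Section Cov.
Variables (R : realType) (d : nat).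

Lemma covminE (W : 'M[R]_d) (C G : set 'rV[R]_d) i : covmin W C G i =
  if i == 0%N then 0 else ereal_inf [set mu%:E | mu in Good W C G i].
Proof. by []. Qed.

Lemma good0 (W : 'M[R]_d) (C G : set 'rV[R]_d) : C 0%R -> G 0%R -> Good W C G 0 0%R.
Proof.
move=> C0 G0; split => // a M aW MW rkM.
have WM : (W <= M)%MS.
  by have [_ /esym] := mxrank_leqif_sup MW; rewrite rkM subn0 eqxx.
exists 0%R, 0%R, (- a)%R; split => //.
  by rewrite -scaleN1r; apply: scalemx_sub; apply: submx_trans WM.
by rewrite scale0r !add0r subrr.
Qed.

Lemma covmin_ge0 (W : 'M[R]_d) (C G : set 'rV[R]_d) i : 0 <= covmin W C G i.
Proof.
rewrite covminE; case: ifP => // _.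
apply: le_ereal_inf_tmp => _ [mu [mu0 _] <-]; by rewrite lee_fin.
Qed.

Lemma covmin_approx (W : 'M[R]_d) (C G : set 'rV[R]_d) j (e : R) : C 0%R -> G 0%R -> (0 < e)%R ->
  covmin W C G j \is a fin_num ->
  exists mu, Good W C G j mu /\ mu%:E <= covmin W C G j + e%:E.
Proof.
move=> C0 G0 e0; rewrite covminE; case: ifP => [/eqP -> _|_ fin].
  by exists 0%R; split; [exact: good0 | rewrite add0e lee_fin ltW].
have [_ [mu Gmu <-] lt] := lb_ereal_inf_adherent e0 fin.
by exists mu; split => //; apply: ltW.
Qed.

Lemma convex_comb (K : set 'rV[R]_d) (mu mu1 mu2 : R) c c2 :
  @Defs.convex_set R d K -> K 0%R -> (0 <= mu1)%R -> (0 <= mu2)%R -> (mu1 + mu2 <= mu)%R ->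
  K c -> K c2 -> exists c0, K c0 /\ (mu *: c0 = mu1 *: c + mu2 *: c2)%R.
Proof.
move=> Kc K0 m1 m2 le Kc1 Kc2.
have [s0|sn0] := eqVneq (mu1 + mu2)%R 0%R.
  have e1 : mu1 = 0%R by lra.
  have e2 : mu2 = 0%R by lra.
  by exists 0%R; split => //; rewrite e1 e2 !scale0r scaler0 addr0.
have spos : (0 < mu1 + mu2)%R by rewrite lt0r sn0 /=; lra.
have mpos : (0 < mu)%R by lra.
set s := (mu1 + mu2)%R.
pose z := ((mu1 / s) *: c + (1 - mu1 / s) *: c2)%R.
have Kz : K z.
  apply: Kc => //; apply/andP; split.
    by apply: divr_ge0 => //; apply: ltW.
  by rewrite ler_pdivrMr // mul1r /s; lra.
exists ((s / mu) *: z + (1 - s / mu) *: 0)%R; split.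
  apply: Kc => //; apply/andP; split.
    by apply: divr_ge0 => //; apply: ltW.
  by rewrite ler_pdivrMr // mul1r.
apply/rowP => k; rewrite !mxE /=.
have : s != 0%R by rewrite /s.
have : mu != 0%R by rewrite gt_eqF.
move=> h1 h2; rewrite /s; field.
by rewrite h1 /= -/s h2.
Qed.

End Cov.

Lemma subN (R : realType) (d : nat) (x : 'rV[R]_d) (W : 'M[R]_d) :
  (x <= W)%MS -> ((- x)%R <= W)%MS.
Proof. by move=> h; rewrite -scaleN1r; apply: scalemx_sub. Qed.

Arguments covmin_approx {R d W C G j e}.
Arguments convex_comb {R d K mu mu1 mu2 c c2}.
Arguments decomp {R d} V x.

Local Close Scope ereal_scope.
Theorem theorem1p1 (R : realType) (d : nat) (K L : set 'rV[R]_d)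
  (V : 'M[R]_d) (i : nat) :
  convex_body K -> K 0 -> is_lattice L -> rational_subspace L V ->
  (1 <= i <= d)%N ->
  (covmin 1%:M K L i <=
   \big[maxe/-oo]_(j < (\rank V).+1 | (j <= i)%N && (i - j <= d - \rank V)%N)
     (covmin V (proj_set V K) (proj_set V L) j
      + covmin (orth_compl V) (K `&` subspace_set (orth_compl V))
               (L `&` subspace_set (orth_compl V)) (i - j)))%E.
Proof.
move=> [Kconv _] K0 [L0 Lsub _ _] _ /andP[i1 id].
set W := orth_compl V.
set l := \rank V.
have rkW : \rank W = (d - l)%N by apply: rankW.
have ld : (l <= d)%N by apply: rank_leq_col.
have Ladd : forall x y, L x -> L y -> L (x + y)%R.
  move=> x y Lx Ly; have := Lsub x (0 - y)%R Lx (Lsub 0%R y L0 Ly).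
  by rewrite sub0r opprK.
have PK0 : proj_set V K 0%R.
  by exists 0%R => //; split; [exact: sub0mx | rewrite subr0 mul0mx].
have PL0 : proj_set V L 0%R.
  by exists 0%R => //; split; [exact: sub0mx | rewrite subr0 mul0mx].
have WK0 : (K `&` subspace_set W) 0%R by split => //; exact: sub0mx.
have WL0 : (L `&` subspace_set W) 0%R by split => //; exact: sub0mx.
set F := fun j : nat => covmin V (proj_set V K) (proj_set V L) j
      + covmin W (K `&` subspace_set W) (L `&` subspace_set W) (i - j).
have F0 : forall j, (0 <= F j)%E by move=> j; apply: adde_ge0; apply: covmin_ge0.
set Mx := (X in (_ <= X)%E).
have termle : forall j : 'I_l.+1, (j <= i)%N -> (i - j <= d - l)%N -> (F j <= Mx)%E.
  move=> j h1 h2; rewrite /Mx; apply: le_bigmax_cond.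
  by rewrite h1 h2.
have j0lt : (i - (d - l) < l.+1)%N by lia.
have Mx0 : (0 <= Mx)%E.
  apply: le_trans (F0 (Ordinal j0lt)) (termle _ _ _) => /=; lia.
have [[m Hm]|Hinf] : (exists m : R, Mx = m%:E) \/ Mx = +oo%E.
  clear termle; move: Mx0; case: Mx => [m _|_|] ; [by left; exists m | by right | ].
  by rewrite leeNy_eq.
2: by rewrite Hinf leey.
rewrite Hm; apply/lee_addgt0Pr => e e0.
rewrite covminE ifF; last by apply/eqP; lia.
apply: ereal_inf_lbound; exists (m + e)%R => //.
have m0 : (0 <= m)%R by rewrite -lee_fin -Hm.
split; first lra.
move=> a M _ _; rewrite mxrank1 => rkM.
set Mw := (M :&: W)%MS.
set P := ((M + W) :&: V)%MS.
have e1 : (\rank (M + W)%MS + \rank Mw = \rank M + \rank W)%N := mxrank_sum_cap M W.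
have e2 : (\rank ((M + W) + V)%MS + \rank P = \rank (M + W)%MS + l)%N := mxrank_sum_cap (M + W)%MS V.
have e3 : \rank ((M + W) + V)%MS = d.
  apply/eqP; rewrite eqn_leq rank_leq_col /=.
  rewrite -{1}(@rankVW _ _ V); apply: mxrankS; rewrite addsmx_sub; apply/andP; split.
    exact: addsmxSr.
  apply: submx_trans (addsmxSl _ _); exact: addsmxSr.
have kW : (\rank Mw <= \rank W)%N := mxrankS (capmxSr _ _).
have kM : (\rank Mw <= \rank M)%N := mxrankS (capmxSl _ _).
have pl : (\rank P <= l)%N := mxrankS (capmxSr _ _).
have rMW : (\rank (M + W)%MS <= d)%N := rank_leq_col _.
pose j := (l - \rank P)%N.
have jE : j = (l - \rank P)%N := erefl.
have lE : l = \rank V := erefl.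
have jlt : (j < l.+1)%N by lia.
have hj1 : (j <= i)%N by lia.
have hj2 : (i - j <= d - l)%N by lia.
have rkP : \rank P = (\rank V - j)%N by lia.
have rkMw : \rank Mw = (\rank W - (i - j))%N by lia.
have Fle := termle (Ordinal jlt) hj1 hj2; rewrite Hm /F /= in Fle.
set cA := covmin V (proj_set V K) (proj_set V L) j in Fle.
set cB := covmin W (K `&` subspace_set W) (L `&` subspace_set W) (i - j) in Fle.
have cA0 : (0 <= cA)%E := covmin_ge0 _ _ _ _ _ _.
have cB0 : (0 <= cB)%E := covmin_ge0 _ _ _ _ _ _.
have finA : cA \is a fin_num.
  rewrite ge0_fin_numE //; apply: (le_lt_trans (leeDl _ cB0)).
  by apply: le_lt_trans Fle _; exact: ltry.
have finB : cB \is a fin_num.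
  rewrite ge0_fin_numE //; apply: (le_lt_trans (leeDr _ cA0)).
  by apply: le_lt_trans Fle _; exact: ltry.
have e2pos : (0 < e / 2)%R by apply: divr_gt0.
have [mu1 [G1 le1]] := covmin_approx PK0 PL0 e2pos finA.
have [mu2 [G2 le2]] := covmin_approx WK0 WL0 e2pos finB.
have mule : (mu1 + mu2 <= m + e)%R.
  move: Fle le1 le2; rewrite -/cA -/cB -(fineK finA) -(fineK finB) -!EFinD !lee_fin.
  lra.
case: G1 => mu10 H1; case: G2 => mu20 H2.
have [a' [aw [a'V awW ea]]] := decomp V a.
have [c1 [g1 [y1 [[c Kc [c1V c1e]] [g Lg [g1V g1e]] y1P eq1]]]] :=
  H1 a' P a'V (capmxSr _ _) rkP.
have y1MW : (y1 <= M + W)%MS := submx_trans y1P (capmxSl _ _).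
have [uu [w1 [uuM w1W ey1]]] :
    exists uu w1, [/\ (uu <= M)%MS, (w1 <= W)%MS & y1 = (uu + w1)%R].
  case/sub_addsmxP: y1MW => u ->; exists (u.1 *m M), (u.2 *m W); split => //;
  exact: submxMl.
have cc1 : ((c - c1)%R <= W)%MS by apply/sub_kermxP.
have gg1 : ((g - g1)%R <= W)%MS by apply/sub_kermxP.
set b := (a + uu - mu1 *: c - g)%R.
have bW : (b <= W)%MS.
  have -> : b = (aw - w1 - mu1 *: (c - c1) - (g - g1))%R.
    subst y1 a; apply/rowP => k; move/rowP: eq1 => /(_ k); rewrite /b !mxE => h.
    lra.
  apply: addmx_sub; last exact: subN.
  apply: addmx_sub; last by apply: subN; apply: scalemx_sub.
  by apply: addmx_sub => //; apply: subN.
have [c2 [g2 [y2 [[Kc2 c2W] [Lg2 g2W] y2Mw eq2]]]] := H2 b Mw bW (capmxSr _ _) rkMw.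
have [c0 [Kc0 ec0]] := convex_comb Kconv K0 mu10 mu20 mule Kc Kc2.
exists c0, (g + g2)%R, (uu + y2)%R; split.
- exact: Kc0.
- by apply: Ladd.
- by apply: addmx_sub => //; apply: submx_trans y2Mw (capmxSl _ _).
- rewrite ec0; apply/rowP => k; move/rowP: eq2 => /(_ k); rewrite /b !mxE => h.
  lra.
Qed.
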